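(* Let $A,B\subset\mathbb{R}^n$ be set-germs at $0$ with $0\in\overline{A}\cap\overline{B}$, and let $h:(\mathbb{R}^n,0)\to(\mathbb{R}^n,0)$ be a bi-Lipschitz homeomorphism (germ). Suppose there are $d>1$ and $C>0$ such that $A\subset ST_d(B;C)$ as germs at $0$. Then $D(h(A))\subset D(h(B))$. Moreover, $D(ST_d(h(A);C'))\subset D(h(B))$ for any $C'>0$.
   Context: A bi-Lipschitz homeomorphism germ is a homeomorphism between neighbourhoods of $0$ fixing $0$ with $K_1|x-y|\le|h(x)-h(y)|\le K_2|x-y|$ for some $0<K_1\le K_2$ near $0$. Sea-tangle neighbourhood: $ST_d(X;C)=\{x\in\mathbb{R}^n : \mathrm{dist}(x,X)\le C|x|^d\}$. ''As germs at $0$'' means after intersecting with some neighbourhood of $0$. Direction set: $D(X)=\{a\in S^{n-1} : \exists\, \{x_i\}\subset X\setminus\{0\},\ x_i\to 0,\ x_i/\|x_i\|\to a\}$. *)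

(* Defs.v *)
From HB Require Import structures.
From mathcomp Require Import all_boot all_order all_algebra.
From mathcomp Require Import all_classical all_reals all_analysis.
Set Implicit Arguments. Unset Strict Implicit. Unset Printing Implicit Defensive.
Import Order.TTheory GRing.Theory Num.Theory.
Import numFieldNormedType.Exports.
Local Open Scope classical_set_scope.
Local Open Scope ring_scope.

Section Defs.
Variables (R : realType) (n : nat).
Notation V := 'rV[R]_n.

Definition enorm (x : V) : R := Num.sqrt (\sum_(i < n) (x 0 i) ^+ 2).

Definition edist (x : V) (X : set V) : R := inf [set enorm (x - y) | y in X].

Definition seatangle (d : R) (X : set V) (C : R) : set V :=
  [set x | edist x X <= C * (enorm x) `^ d].

Definition germ_subset (X Y : set V) : Prop :=
  exists r : R, 0 < r /\ X `&` [set x | enorm x < r] `<=` Y.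

Definition usphere : set V := [set a | enorm a = 1].

Definition dirset (X : set V) : set V :=
  [set a | usphere a /\
    exists u : nat -> V,
      (forall i, X (u i) /\ u i != 0) /\
      u @ \oo --> (0 : V) /\
      (fun i => (enorm (u i))^-1 *: u i) @ \oo --> a].

Definition bilip_homeo_germ (h : V -> V) (U W : set V) : Prop :=
  (open U /\ open W /\ U 0 /\ W 0 /\ h 0 = 0) /\
  (h @` U = W) /\
  {within U, continuous h} /\
  (exists g : V -> V,
     (forall x, U x -> g (h x) = x) /\ {within W, continuous g}) /\
  (exists K1 K2 r : R, 0 < K1 /\ K1 <= K2 /\ 0 < r /\
     forall x y, enorm x < r -> enorm y < r ->
       K1 * enorm (x - y) <= enorm (h x - h y) /\
       enorm (h x - h y) <= K2 * enorm (x - y)).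

End Defs.

(* Main.v *)
Require Import Defs.
From HB Require Import structures.
From mathcomp Require Import all_boot all_order all_algebra.
From mathcomp Require Import all_classical all_reals all_analysis.
From mathcomp Require Import ring lra.
Import Order.TTheory GRing.Theory Num.Theory.
Import numFieldNormedType.Exports.
Local Open Scope classical_set_scope.
Local Open Scope ring_scope.
Set Implicit Arguments. Unset Strict Implicit. Unset Printing Implicit Defensive.

Lemma e_ge0 (R : realType) n (x : 'rV[R]_n) : 0 <= enorm x.
Proof. exact: sqrtr_ge0. Qed.

Lemma S_ge0 (R : realType) n (x : 'rV[R]_n) : 0 <= \sum_(i < n) (x 0 i) ^+ 2.
Proof. by apply: sumr_ge0 => i _; exact: sqr_ge0. Qed.

Lemma e_sq (R : realType) n (x : 'rV[R]_n) :
  enorm x ^+ 2 = \sum_(i < n) (x 0 i) ^+ 2.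
Proof. by rewrite /enorm sqr_sqrtr // S_ge0. Qed.

Lemma eZ (R : realType) n (k : R) (x : 'rV[R]_n) : enorm (k *: x) = `|k| * enorm x.
Proof.
rewrite /enorm.
have -> : \sum_(i < n) ((k *: x) 0 i) ^+ 2 = k ^+ 2 * \sum_(i < n) (x 0 i) ^+ 2.
  by rewrite mulr_sumr; apply: eq_bigr => i _; rewrite mxE exprMn.
by rewrite sqrtrM ?sqr_ge0 // sqrtr_sqr.
Qed.

Lemma eN (R : realType) n (x : 'rV[R]_n) : enorm (- x) = enorm x.
Proof. by rewrite -scaleN1r eZ normrN normr1 mul1r. Qed.

Lemma e0 (R : realType) n : enorm (0 : 'rV[R]_n) = 0.
Proof. by rewrite -(scale0r (0 : 'rV[R]_n)) eZ normr0 mul0r. Qed.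

Lemma e_eq0 (R : realType) n (x : 'rV[R]_n) : enorm x = 0 -> x = 0.
Proof.
move=> h; have : \sum_(i < n) (x 0 i) ^+ 2 = 0 by rewrite -e_sq h expr0n.
move/psumr_eq0P => H; apply/matrixP => i j; rewrite !mxE (ord1 i).
have /eqP := H (fun i _ => sqr_ge0 _) j isT; rewrite sqrf_eq0 => /eqP.
done.
Qed.

Lemma e_CS (R : realType) n (x y : 'rV[R]_n) :
  \sum_(i < n) x 0 i * y 0 i <= enorm x * enorm y.
Proof.
have [/e_eq0 ->|ha] := eqVneq (enorm x) 0.
  by rewrite e0 mul0r (eq_bigr (fun _ => 0)) ?big1 // => i _; rewrite mxE mul0r.
have [/e_eq0 ->|hb] := eqVneq (enorm y) 0.
  by rewrite e0 mulr0 (eq_bigr (fun _ => 0)) ?big1 // => i _; rewrite mxE mulr0.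
set a := enorm x in ha *; set b := enorm y in hb *.
have a0 : 0 < a by rewrite lt_neqAle eq_sym ha e_ge0.
have b0 : 0 < b by rewrite lt_neqAle eq_sym hb e_ge0.
have H : (2 * a * b) * \sum_(i < n) x 0 i * y 0 i <= 2 * (a * b) ^+ 2.
  have -> : 2 * (a * b) ^+ 2 = b ^+ 2 * a ^+ 2 + a ^+ 2 * b ^+ 2 by ring.
  have Ea : a ^+ 2 = \sum_(i < n) (x 0 i) ^+ 2 by rewrite /a e_sq.
  have Eb : b ^+ 2 = \sum_(i < n) (y 0 i) ^+ 2 by rewrite /b e_sq.
  have -> : b ^+ 2 * a ^+ 2 + a ^+ 2 * b ^+ 2 =
     \sum_(i < n) (b ^+ 2 * x 0 i ^+ 2 + a ^+ 2 * y 0 i ^+ 2).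
    by rewrite big_split /= -!mulr_sumr -Ea -Eb.
  rewrite mulr_sumr; apply: ler_sum => i _.
  have := sqr_ge0 (b * x 0 i - a * y 0 i); nra.
have p : 0 < 2 * a * b by nra.
rewrite -(ler_pM2l p); nra.
Qed.

Lemma eD (R : realType) n (x y : 'rV[R]_n) : enorm (x + y) <= enorm x + enorm y.
Proof.
have h : enorm (x + y) ^+ 2 <= (enorm x + enorm y) ^+ 2.
  have -> : (enorm x + enorm y) ^+ 2 = enorm x ^+ 2 + 2 * (enorm x * enorm y) + enorm y ^+ 2 by ring.
  have := e_CS x y.
  rewrite !e_sq => H.
  have -> : \sum_(i < n) (x + y) 0 i ^+ 2 = \sum_(i < n) x 0 i ^+ 2 + 2 * \sum_(i < n) x 0 i * y 0 i + \sum_(i < n) y 0 i ^+ 2.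
    rewrite mulr_sumr -!big_split /=; apply: eq_bigr => i _; rewrite mxE; ring.
  lra.
by rewrite -ler_sqr ?nnegrE ?addr_ge0 ?e_ge0.
Qed.

Lemma eB (R : realType) n (x y : 'rV[R]_n) : enorm (x - y) = enorm (y - x).
Proof. by rewrite -eN opprB. Qed.

Lemma e_tri (R : realType) n (x y z : 'rV[R]_n) : enorm (x - z) <= enorm (x - y) + enorm (y - z).
Proof. by have := eD (x - y) (y - z); rewrite -addrA (addrA (- y)) addNr add0r. Qed.

Lemma norm_le_e (R : realType) n (x : 'rV[R]_n) : `|x| <= enorm x.
Proof.
rewrite (_ : `|x| = mx_norm x) // mx_normrE; apply: bigmax_le => [|[i j] _]; first exact: e_ge0.
rewrite /= (ord1 i) -ler_sqr ?nnegrE ?e_ge0 // e_sq real_normK ?num_real //.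
rewrite (bigD1 j) //= lerDl; apply: sumr_ge0 => k _; exact: sqr_ge0.
Qed.

Lemma e_le_norm (R : realType) n (x : 'rV[R]_n) : enorm x <= n%:R * `|x|.
Proof.
have c : forall j, `|x 0 j| <= `|x|.
  move=> j; rewrite (_ : `|x| = mx_norm x) // mx_normrE.
  exact: (le_bigmax _ (fun ij : 'I_1 * 'I_n => `|x ij.1 ij.2|) (0, j)).
rewrite -ler_sqr ?nnegrE ?mulr_ge0 ?e_ge0 // e_sq.
apply: (@le_trans _ _ (\sum_(i < n) `|x| ^+ 2)).
  apply: ler_sum => i _; rewrite -real_normK ?num_real //.
  by rewrite ler_sqr ?nnegrE // c.
rewrite sumr_const card_ord -[_ *+ n]mulr_natl exprMn.
apply: ler_wpM2r; first exact: sqr_ge0.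
case: n {x c} => [|m]; first by rewrite expr0n.
by rewrite expr2 ler_peMr // ler1n.
Qed.

Definition ev (P : nat -> Prop) := exists N, forall i, (N <= i)%N -> P i.
Definition tends (R : realType) n (u : nat -> 'rV[R]_n) (a : 'rV[R]_n) :=
  forall eps : R, 0 < eps -> ev (fun i => enorm (u i - a) < eps).
Definition rel (R : realType) n (u v : nat -> 'rV[R]_n) :=
  forall eps : R, 0 < eps -> ev (fun i => enorm (v i - u i) <= eps * enorm (u i)).
Definition nz (R : realType) n (u : nat -> 'rV[R]_n) := fun i => (enorm (u i))^-1 *: u i.

Lemma ev_and P Q : ev P -> ev Q -> ev (fun i => P i /\ Q i).
Proof.
move=> [N1 H1] [N2 H2]; exists (maxn N1 N2) => i hi; split.
  by apply: H1; apply: leq_trans hi; exact: leq_maxl.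
by apply: H2; apply: leq_trans hi; exact: leq_maxr.
Qed.

Lemma ev_imp (P Q : nat -> Prop) : (forall i, P i -> Q i) -> ev P -> ev Q.
Proof. by move=> H [N HN]; exists N => i /HN /H. Qed.

Lemma near_ev (P : nat -> Prop) : (\forall t \near \oo, P t) <-> ev P.
Proof.
split; first by move=> [N _ H]; exists N => i; apply: H.
by move=> [N H]; exists N.
Qed.

Lemma cvg_tends (R : realType) n (u : nat -> 'rV[R]_n) a :
  u @ \oo --> a <-> tends u a.
Proof.
rewrite cvgrPdist_lt; split.
  move=> H eps e0.
  have p : 0 < eps / (n%:R + 1) by rewrite divr_gt0 // ltr_wpDl.
  apply: ev_imp (iffLR (near_ev _) (H _ p)) => i hi.
  apply: (le_lt_trans (e_le_norm _)).
  rewrite -opprB normrN.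
  have hn : 0 <= n%:R :> R by [].
  have hx := normr_ge0 (a - u i).
  have : (n%:R + 1) * `|a - u i| < eps.
    by rewrite mulrC -ltr_pdivlMr // ltr_wpDl.
  nra.
move=> H eps e0; apply/near_ev; apply: ev_imp (H _ e0) => i hi.
by rewrite -opprB normrN; apply: le_lt_trans (norm_le_e _) hi.
Qed.

Lemma e_gt0 (R : realType) n (x : 'rV[R]_n) : x != 0 -> 0 < enorm x.
Proof.
move=> hx; rewrite lt_neqAle e_ge0 andbT; apply/eqP => h.
by move: hx; rewrite (e_eq0 (esym h)) eqxx.
Qed.

Lemma e_rev (R : realType) n (x y : 'rV[R]_n) : `|enorm x - enorm y| <= enorm (x - y).
Proof.
have h1 := e_tri x y 0; have h2 := e_tri y x 0.
rewrite !subr0 in h1 h2; rewrite (eB y x) in h2.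
rewrite ler_norml; apply/andP; split; lra.
Qed.

Lemma nz_diff (R : realType) n (u v : 'rV[R]_n) : u != 0 -> v != 0 ->
  enorm ((enorm v)^-1 *: v - (enorm u)^-1 *: u) <= 2 * enorm (v - u) / enorm v.
Proof.
move=> hu hv; have pu := e_gt0 hu; have pv := e_gt0 hv.
have -> : (enorm v)^-1 *: v - (enorm u)^-1 *: u =
   (enorm v)^-1 *: (v - u) + ((enorm v)^-1 - (enorm u)^-1) *: u.
  by rewrite scalerBr scalerBl addrA subrK.
apply: (le_trans (eD _ _)); rewrite !eZ.
have -> : `|(enorm v)^-1 - (enorm u)^-1| * enorm u = `|enorm u - enorm v| / enorm v.
  have hne : (enorm v != 0) && (enorm u != 0) by rewrite !gt_eqF.
  rewrite (_ : (enorm v)^-1 - (enorm u)^-1 = (enorm u - enorm v) * (enorm u * enorm v)^-1);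
    last by field.
  rewrite normrM [`|(_ * _)^-1|]ger0_norm ?invr_ge0 ?mulr_ge0 ?e_ge0 //; field.
  exact: hne.
rewrite ger0_norm ?invr_ge0 ?e_ge0 // mulrC -mulrDl.
rewrite ler_pM2r ?invr_gt0 //.
have := e_rev u v; rewrite (eB u v); lra.
Qed.

Lemma half_gt0 (R : realType) : 0 < 1 / 2 :> R.
Proof. by rewrite divr_gt0. Qed.

Lemma rel_ne0 (R : realType) n (u v : nat -> 'rV[R]_n) :
  ev (fun i => u i != 0) -> rel u v -> ev (fun i => v i != 0).
Proof.
move=> hu hr; have := ev_and hu (hr (1/2) (half_gt0 R)).
apply: ev_imp => i [h1 h2]; apply/eqP => h0; move: h2; rewrite h0 sub0r eN.
have := e_gt0 h1; lra.
Qed.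

Lemma rel_tends0 (R : realType) n (u v : nat -> 'rV[R]_n) :
  tends u 0 -> rel u v -> tends v 0.
Proof.
move=> hu hr eps e0; have p : 0 < eps / 2 by rewrite divr_gt0.
have := ev_and (hu _ p) (hr 1 ltr01); apply: ev_imp => i []; rewrite !subr0 mul1r.
move=> h1 h2; have := e_tri (v i) (u i) 0; rewrite !subr0; lra.
Qed.

Lemma rel_trans (R : realType) n (u w v : nat -> 'rV[R]_n) :
  rel u w -> rel w v -> rel u v.
Proof.
move=> h1 h2 eps e0; have p : 0 < eps / 3 by rewrite divr_gt0.
have := ev_and (ev_and (h1 _ p) (h1 1 ltr01)) (h2 _ p).
apply: ev_imp => i [[a b] c]; rewrite mul1r in b.
have t1 := e_tri (v i) (w i) (u i).
have t2 := e_tri (w i) (u i) 0; rewrite !subr0 in t2.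
have g := e_ge0 (u i).
nra.
Qed.

Lemma rel_dir (R : realType) n (u v : nat -> 'rV[R]_n) a :
  ev (fun i => u i != 0) -> tends (nz u) a -> rel u v -> tends (nz v) a.
Proof.
move=> hu ht hr eps e0.
have p2 : 0 < eps / 2 by rewrite divr_gt0.
have p8 : 0 < eps / 8 by rewrite divr_gt0.
have := ev_and (ev_and (ev_and hu (rel_ne0 hu hr)) (ht _ p2))
               (ev_and (hr _ p8) (hr (1/2) (half_gt0 R))).
apply: ev_imp => i [[[nu nv] h1] [h2 h3]].
have pu := e_gt0 nu; have pv := e_gt0 nv.
have t1 := e_tri (nz v i) (nz u i) a.
have t2 := nz_diff nu nv.
have t3 := e_tri (u i) (v i) 0; rewrite !subr0 (eB (u i)) in t3.
have t4 : 2 * enorm (v i - u i) / enorm (v i) <= eps / 2.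
  rewrite ler_pdivrMr //; nra.
rewrite /nz in t1 h1 *; lra.
Qed.

Lemma dir_elim (R : realType) n (X : set 'rV[R]_n) a : dirset X a ->
  usphere a /\ exists u : nat -> 'rV[R]_n,
    (forall i, X (u i) /\ u i != 0) /\ tends u 0 /\ tends (nz u) a.
Proof.
move=> [ha [u [h1 [h2 h3]]]]; split => //; exists u; split => //.
by split; apply/cvg_tends.
Qed.

Lemma tends_shift (R : realType) n (u : nat -> 'rV[R]_n) a N :
  tends u a -> tends (fun i => u (i + N)%N) a.
Proof.
move=> h eps e0; have [M HM] := h _ e0; exists M => i hi; apply: HM.
by apply: leq_trans hi _; exact: leq_addr.
Qed.

Lemma dir_intro (R : realType) n (X : set 'rV[R]_n) a (v : nat -> 'rV[R]_n) :
  usphere a -> ev (fun i => X (v i) /\ v i != 0) -> tends v 0 -> tends (nz v) a ->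
  dirset X a.
Proof.
move=> ha [N HN] h1 h2; split => //; exists (fun i => v (i + N)%N); split.
  by move=> i; apply: HN; exact: leq_addl.
split; apply/cvg_tends; first exact: tends_shift.
exact: (tends_shift N h2).
Qed.

Definition approx (R : realType) n (X Y : set 'rV[R]_n) :=
  forall u : nat -> 'rV[R]_n, ev (fun i => X (u i) /\ u i != 0) -> tends u 0 ->
  exists v, ev (fun i => Y (v i)) /\ rel u v.

Lemma approx_dir (R : realType) n (X Y : set 'rV[R]_n) :
  approx X Y -> dirset X `<=` dirset Y.
Proof.
move=> hA a /dir_elim [ha [u [h1 [h2 h3]]]].
have hu : ev (fun i => X (u i) /\ u i != 0) by exists 0%N.
have [v [hv hr]] := hA u hu h2.
have hu' : ev (fun i => u i != 0) by exists 0%N => i _; case: (h1 i).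
apply: (dir_intro ha _ (rel_tends0 h2 hr) (rel_dir hu' h3 hr)).
exact: ev_and hv (rel_ne0 hu' hr).
Qed.

Lemma approx_trans (R : realType) n (X Y Z : set 'rV[R]_n) :
  approx X Y -> approx Y Z -> approx X Z.
Proof.
move=> hXY hYZ u hu h0.
have [w [hw hr]] := hXY u hu h0.
have hu' : ev (fun i => u i != 0) by apply: ev_imp hu => i [].
have [v [hv hr2]] := hYZ w (ev_and hw (rel_ne0 hu' hr)) (rel_tends0 h0 hr).
by exists v; split => //; exact: rel_trans hr hr2.
Qed.

Lemma pow_small (R : realType) (d C : R) : 1 < d -> 0 <= C ->
  forall t : nat -> R, (forall i, 0 <= t i) ->
  (forall eps, 0 < eps -> ev (fun i => t i < eps)) ->
  forall eps, 0 < eps -> ev (fun i => C * t i `^ d + t i ^+ 2 <= eps * t i).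
Proof.
move=> d1 C0 t t0 ht eps e0.
have p2 : 0 < eps / 2 by rewrite divr_gt0.
set c := eps / (2 * (C + 1)).
have c0 : 0 < c by rewrite /c divr_gt0 // mulr_gt0 // ltr_wpDl.
have d0 : 0 < d - 1 by rewrite subr_gt0.
have dl : 0 < c `^ (d - 1)^-1 by rewrite powR_gt0.
have := ev_and (ht _ p2) (ht _ dl); apply: ev_imp => i [h1 h2].
have E : t i `^ d = t i * t i `^ (d - 1).
  by rewrite mulr_powRB1 // ?t0 // (lt_trans ltr01).
have F : t i `^ (d - 1) <= c.
  have := @ge0_ler_powR _ (d - 1) (ltW d0) (t i) (c `^ (d - 1)^-1).
  rewrite !nnegrE t0 powR_ge0 -powRrM mulVf ?gt_eqF // powRr1 ?(ltW c0) //.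
  by move=> H; apply: H => //; exact: ltW.
have G : C * c <= eps / 2.
  have Hc : c * (2 * (C + 1)) = eps.
    rewrite /c mulrC mulrCA divff ?mulr1 //.
    by rewrite gt_eqF // mulr_gt0 // ltr_wpDl.
  lra.
rewrite E.
have g1 := t0 i; have g2 := powR_ge0 (t i) (d - 1).
set p := t i `^ (d - 1) in F g2 *; set x := t i in g1 h1 *.
have k1 : C * (x * p) <= x * (eps / 2).
  have : C * (x * p) <= C * (x * c) by apply: ler_wpM2l => //; apply: ler_wpM2l.
  have : x * (C * c) <= x * (eps / 2) by apply: ler_wpM2l.
  rewrite mulrCA; lra.
have k2 : x ^+ 2 <= x * (eps / 2) by rewrite expr2; apply: ler_wpM2l => //; exact: ltW.
lra.
Qed.

Lemma edist_approx (R : realType) n (X : set 'rV[R]_n) x s :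
  X !=set0 -> 0 < s -> exists y, X y /\ enorm (x - y) < Defs.edist x X + s.
Proof.
move=> [y0 Xy0] s0.
have hi : has_inf [set enorm (x - y) | y in X].
  split; first by exists (enorm (x - y0)), y0.
  by exists 0 => _ [y _ <-]; exact: e_ge0.
have [_ [y Xy <-] H] := inf_adherent s0 hi.
by exists y.
Qed.

Lemma cont_seq (R : realType) n (g : 'rV[R]_n -> 'rV[R]_n) (W : set 'rV[R]_n) :
  open W -> W 0 -> {within W, continuous g} ->
  forall u, tends u 0 -> tends (fun i => g (u i)) (g 0).
Proof.
move=> oW W0 gc u hu.
have H : g @ nbhs (0 : 'rV[R]_n) --> g 0.
  have := gc 0; rewrite /continuous_at -nbhs_subspace_interior //.
  by move/interior_id : oW => ->.
apply/cvg_tends; apply: (cvg_comp _ _ (iffRL (cvg_tends _ _) hu) H).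
Qed.

Lemma open_ball_e (R : realType) n (U : set 'rV[R]_n) :
  open U -> U 0 -> exists rho : R, 0 < rho /\ forall y, enorm y < rho -> U y.
Proof.
move=> oU U0; have : nbhs (0 : 'rV[R]_n) U by apply: open_nbhs_nbhs; split.
move/nbhs_ballP => [e e0 H]; exists e; split => // y hy; apply: H.
rewrite -ball_normE /ball_ /= sub0r normrN; exact: le_lt_trans (norm_le_e _) hy.
Qed.

Lemma approx_ST (R : realType) n (X : set 'rV[R]_n) (d C' : R) :
  1 < d -> 0 < C' -> X !=set0 -> approx (seatangle d X C') X.
Proof.
move=> d1 C0 hX w hw h0.
have Hex : forall i, exists y, (w i != 0 -> seatangle d X C' (w i) ->
    X y /\ enorm (w i - y) < C' * enorm (w i) `^ d + enorm (w i) ^+ 2).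
  move=> i; case: (pselect (w i != 0 /\ seatangle d X C' (w i))) => [[nw hs]|no].
    have p : 0 < enorm (w i) ^+ 2 by rewrite exprn_gt0 // e_gt0.
    have [y [Xy hy]] := edist_approx (w i) hX p.
    exists y => _ _; split => //; rewrite /seatangle /= in hs; lra.
  by exists 0 => a b; exfalso; apply: no.
have [u Hu] := choice Hex.
exists u; split.
  by apply: ev_imp hw => i [a b]; exact: (Hu i b a).1.
move=> eps e0.
have ht : forall eps, 0 < eps -> ev (fun i => enorm (w i) < eps).
  by move=> e' p; apply: ev_imp (h0 _ p) => i; rewrite subr0.
have := ev_and hw (@pow_small R d C' d1 (ltW C0) (fun i => enorm (w i)) (fun i => e_ge0 (w i)) ht _ e0).
apply: ev_imp => i [[a b] c]; have [_ H] := Hu i b a; rewrite eB; lra.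
Qed.

Lemma approx_main (R : realType) n (A B : set 'rV[R]_n) h (U W : set 'rV[R]_n) (d C : R) :
  closure B 0 -> bilip_homeo_germ h U W -> 1 < d -> 0 < C ->
  germ_subset A (seatangle d B C) ->
  approx (h @` (A `&` U)) (h @` (B `&` U)).
Proof.
move=> cB [[oU [oW [U0 [W0 h0]]]] [hUW [hc [[g [gh gc]] [K1 [K2 [r [K1p [K12 [rp Lip]]]]]]]]]].
move=> d1 C0 [rA [rAp HA]] u hu hu0.
have [rho [rhop Hrho]] := open_ball_e oU U0.
have hB : B !=set0.
  have [b0 [Bb0 _]] := cB setT (@filterT _ (nbhs (0 : 'rV[R]_n)) _).
  by exists b0.
have Hex1 : forall i, exists x, ((h @` (A `&` U)) (u i) -> (A x /\ U x) /\ h x = u i).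
  move=> i; case: (pselect ((h @` (A `&` U)) (u i))) => [[x hx hxe]|no].
    by exists x.
  by exists 0.
have [x Hx] := choice Hex1.
have g0 : g 0 = 0 by rewrite -{1}h0 gh.
have hg := cont_seq oW W0 gc hu0; rewrite g0 in hg.
have hxeq : ev (fun i => ((A (x i) /\ U (x i)) /\ h (x i) = u i) /\ u i != 0).
  by apply: ev_imp hu => i [a b]; split => //; exact: Hx.
have hxt : forall eps, 0 < eps -> ev (fun i => enorm (x i) < eps).
  move=> e' p; apply: ev_imp (ev_and hxeq (hg _ p)) => i [[[[_ Ux] hxu] _]].
  by rewrite subr0 -hxu gh.
have Hex2 : forall i, exists b, (A (x i) -> x i != 0 -> enorm (x i) < rA ->
     B b /\ enorm (x i - b) < C * enorm (x i) `^ d + enorm (x i) ^+ 2).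
  move=> i; case: (pselect (A (x i) /\ x i != 0 /\ enorm (x i) < rA)) => [[Ax [nx xr]]|no].
    have p : 0 < enorm (x i) ^+ 2 by rewrite exprn_gt0 // e_gt0.
    have [y [By hy]] := edist_approx (x i) hB p.
    have hs : seatangle d B C (x i) by apply: HA; split.
    exists y => _ _ _; split => //; rewrite /seatangle /= in hs; lra.
  by exists 0 => a b c; exfalso; apply: no.
have [b Hb] := choice Hex2.
have p2 : 0 < r / 2 by rewrite divr_gt0.
have p3 : 0 < rho / 2 by rewrite divr_gt0.
have ht0 : forall i, 0 <= enorm (x i) by move=> i; exact: e_ge0.
have S : ev (fun i => (((A (x i) /\ U (x i)) /\ h (x i) = u i) /\ u i != 0) /\
   (enorm (x i) < rA /\ enorm (x i) < r / 2 /\ enorm (x i) < rho / 2) /\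
   C * enorm (x i) `^ d + enorm (x i) ^+ 2 <= 1 * enorm (x i)).
  apply: ev_and hxeq (ev_and (ev_and (hxt _ rAp) (ev_and (hxt _ p2) (hxt _ p3)))
    (@pow_small R d C d1 (ltW C0) (fun i => enorm (x i)) ht0 hxt _ ltr01)).
have key : forall i, ((((A (x i) /\ U (x i)) /\ h (x i) = u i) /\ u i != 0) /\
   (enorm (x i) < rA /\ enorm (x i) < r / 2 /\ enorm (x i) < rho / 2) /\
   C * enorm (x i) `^ d + enorm (x i) ^+ 2 <= 1 * enorm (x i)) ->
   x i != 0 /\ B (b i) /\ enorm (x i - b i) < C * enorm (x i) `^ d + enorm (x i) ^+ 2 /\
   enorm (b i) < r /\ enorm (b i) < rho.
  move=> i [[[[Ax Ux] hxu] nu] [[xa [xr xrho]] pw]].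
  have nx : x i != 0 by apply/eqP => x0; move: nu; rewrite -hxu x0 h0 eqxx.
  have [Bb hb] := Hb i Ax nx xa.
  have t := e_tri (b i) (x i) 0; rewrite !subr0 (eB (b i)) in t.
  do 3?split => //; lra.
exists (fun i => h (b i)); split.
  apply: ev_imp S => i /key [_ [Bb [_ [_ br]]]].
  by exists (b i) => //; split => //; exact: Hrho.
move=> eps ep.
have K2p : 0 < K2 by exact: lt_le_trans K1p K12.
have pe : 0 < eps * K1 / K2 by rewrite divr_gt0 // mulr_gt0.
have z0 : enorm (0 : 'rV[R]_n) < r by rewrite e0.
have := ev_and S (@pow_small R d C d1 (ltW C0) (fun i => enorm (x i)) ht0 hxt _ pe).
apply: ev_imp => i [Si Pi]; have [nx [Bb [hxb [br brho]]]] := key i Si.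
move: Si => [[[[Ax Ux] hxu] nu] [[xa [xr xrho]] pw]].
have xr' : enorm (x i) < r by lra.
have [_ L2] := Lip (b i) (x i) br xr'.
have [L1 _] := Lip (x i) 0 xr' z0.
rewrite h0 subr0 !subr0 hxu in L1.
rewrite -hxu; rewrite (eB (b i)) in L2.
set t := enorm (x i) in L1 hxb Pi *.
have E : K2 * (eps * K1 / K2 * t) = eps * (K1 * t) by field; rewrite gt_eqF.
have Q1 : K2 * enorm (x i - b i) <= K2 * (eps * K1 / K2 * t).
  apply: ler_wpM2l; [exact: ltW | lra].
rewrite E in Q1.
have Q2 : eps * (K1 * t) <= eps * enorm (u i) by apply: ler_wpM2l => //; exact: ltW.
by have := le_trans L2 (le_trans Q1 Q2); rewrite hxu.
Qed.

Unset Implicit Arguments.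

Theorem lemma4p9 (R : realType) (n : nat) (A B : set 'rV[R]_n)
    (h : 'rV[R]_n -> 'rV[R]_n) (U W : set 'rV[R]_n) (d C : R) :
  closure A 0 -> closure B 0 ->
  bilip_homeo_germ h U W ->
  1 < d -> 0 < C ->
  germ_subset A (seatangle d B C) ->
  dirset (h @` (A `&` U)) `<=` dirset (h @` (B `&` U)) /\
  (forall C' : R, 0 < C' ->
     dirset (seatangle d (h @` (A `&` U)) C') `<=` dirset (h @` (B `&` U))).
Proof.
move=> cA cB hh d1 C0 hg.
have M := approx_main cB hh d1 C0 hg.
split; first exact: approx_dir M.
move=> C' C'0; apply: approx_dir; apply: approx_trans M.
apply: approx_ST => //.
have [[oU [_ [U0 _]]] _] := hh.
have hU : nbhs (0 : 'rV[R]_n) U by apply: open_nbhs_nbhs; split.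
have [a [Aa Ua]] := cA U hU.
by exists (h a), a.
Qed.
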